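(* Assume $\mathsf U_k^n\in\mathcal B(b)$ for all $k\in\mathcal V$ and fix $i\in\mathcal V$. (i) For $j\in\mathcal I(i)$, the density $\rho(x,t)$ of the solution of the extended Riemann problem with left data $(\varrho_i^n,\mathsf M_i^n\cdot\mathbf n_{ij},\mathcal E_i^n,\Gamma_i^n)^{\mathsf T}$ and right data $(\varrho_j^n,\mathsf M_j^n\cdot\mathbf n_{ij},\mathcal E_j^n,\Gamma_j^n)^{\mathsf T}$ satisfies, for all $x$ and $t>0$, $$\rho(x,t)\le\max_{Z\in\{i,j\}}\frac{1}{\tau_Z^\infty}=\max_{Z\in\{i,j\}}\frac{(\gamma_Z^n+1)\varrho_Z^n}{(\gamma_Z^n-1)+2b\varrho_Z^n},\qquad \tau_Z^\infty:=\frac{(\gamma_Z^n-1)/\varrho_Z^n+2b}{\gamma_Z^n+1}.$$ (ii) Under the CFL condition $\tau\sum_{j\in\mathcal I(i)\setminus\{i\}}\frac{2d_{ij}^{\mathrm L,n}}{m_i}\le1$, the density $\varrho_i^{\mathrm L,n+1}$ of the low-order update satisfies $$\varrho_i^{\mathrm L,n+1}\le\frac{(\gamma_i^{\min,n}+1)\varrho_i^{\max,n}}{(\gamma_i^{\min,n}-1)+2b\varrho_i^{\max,n}}.$$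
   Context: Let $d\ge1$, $b\ge0$. For $\mathbf u=(\rho,\mathbf m,E)\in\mathbb R^{d+2}$ with $\rho>0$ put $\mathbf v=\mathbf m/\rho$, $e(\mathbf u)=E/\rho-\tfrac12\|\mathbf v\|^2$. Admissible set: $\mathcal B(b)=\{\rho>0,\ 1-b\rho>0,\ e(\mathbf u)>0\}$. A pressure oracle $p:\mathcal B(b)\to[0,\infty)$ is an arbitrary given function; flux $\mathbb f(\mathbf u)=(\mathbf m,\ \mathbf v\otimes\mathbf m+p(\mathbf u)\mathbb I_d,\ \mathbf v(E+p(\mathbf u)))^{\mathsf T}$. Discretization: finite index set $\mathcal V$; for each $i$ a stencil $\mathcal I(i)\ni i$; lumped masses $m_i>0$; vectors $\mathbf c_{ij}\in\mathbb R^d$ with $\mathbf c_{ij}=-\mathbf c_{ji}$, $\sum_{j\in\mathcal I(i)}\mathbf c_{ij}=\mathbf 0$, nonzero for $j\neq i$, $\mathbf n_{ij}=\mathbf c_{ij}/\|\mathbf c_{ij}\|$; time step $\tau>0$; states $\mathsf U_k^n=(\varrho_k^n,\mathsf M_k^n,\mathsf E_k^n)$. For each $k$: $\mathsf p_k^n=p(\mathsf U_k^n)$, $\mathsf e_k^n=e(\mathsf U_k^n)$, $\gamma_k^n=1+\frac{\mathsf p_k^n(1-b\varrho_k^n)}{\varrho_k^n\mathsf e_k^n}$, $\Gamma_k^n=\varrho_k^n\gamma_k^n$; for the pair $(i,j)$ and $Z\in\{i,j\}$, $\mathcal E_Z^n=\mathsf E_Z^n-\frac{\|\mathsf M_Z^n-(\mathsf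 M_Z^n\cdot\mathbf n_{ij})\mathbf n_{ij}\|^2}{2\varrho_Z^n}$. Extended Riemann problem: the 1D system $\partial_t(\rho,m,\mathcal E,\Gamma)^{\mathsf T}+\partial_x(m,\ m^2/\rho+p_{\rm cov},\ \frac m\rho(\mathcal E+p_{\rm cov}),\ \frac m\rho\Gamma)^{\mathsf T}=0$, $p_{\rm cov}=\frac{\Gamma/\rho-1}{1-b\rho}(\mathcal E-\frac{m^2}{2\rho})$, with left data on $x<0$, right data on $x>0$. Let $\lambda(\mathbf n_{ij},\mathsf U_i^n,\mathsf U_j^n)$ be its maximum wave speed and $\widehat\lambda(\cdot)\ge\lambda(\cdot)$ any positive upper bound. For $j\ne i$: $d_{ij}^{\mathrm L,n}=\max(\widehat\lambda(\mathbf n_{ij},\mathsf U_i^n,\mathsf U_j^n)\|\mathbf c_{ij}\|,\widehat\lambda(\mathbf n_{ji},\mathsf U_j^n,\mathsf U_i^n)\|\mathbf c_{ji}\|)$. Low-order update $\mathsf U_i^{\mathrm L,n+1}$ (with density $\varrho_i^{\mathrm L,n+1}$): $\frac{m_i}{\tau}(\mathsf U_i^{\mathrm L,n+1}-\mathsf U_i^n)+\sum_{j\in\mathcal I(i)}\mathbb f(\mathsf U_j^n)\mathbf c_{ij}-\sum_{j\in\mathcal I(i)\setminus\{i\}}d_{ij}^{\mathrm L,n}(\mathsf U_j^n-\mathsf U_i^n)=0$. Auxiliary states: for $j\neq i$, $\overline{\mathsf U}_{ij}^n=\tfrac12(\mathsf U_i^n+\mathsf U_j^n)-\frac{1}{2d_{ij}^{\mathrm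 L,n}}(\mathbb f(\mathsf U_j^n)-\mathbb f(\mathsf U_i^n))\mathbf c_{ij}$, and $\overline{\mathsf U}_{ii}^n:=\mathsf U_i^n$; $\overline\varrho_{ij}^n$ denotes the density of $\overline{\mathsf U}_{ij}^n$. Set $\varrho_i^{\max,n}=\max_{j\in\mathcal I(i)}\overline\varrho_{ij}^n$ and $\gamma_i^{\min,n}=\min_{j\in\mathcal I(i)}\gamma_j^n$. *)

(* Defs.v *)
From HB Require Import structures.
From mathcomp Require Import all_boot all_order all_algebra.
From mathcomp Require Import reals exp.
Set Implicit Arguments. Unset Strict Implicit. Unset Printing Implicit Defensive.
Import Order.TTheory GRing.Theory Num.Theory.
Local Open Scope ring_scope.

Section Defs.
Variable R : realType.

Definition vec (d : nat) := 'I_d -> R.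
Definition dotv d (a c : vec d) : R := \sum_(k < d) a k * c k.
Definition normv d (a : vec d) : R := Num.sqrt (dotv a a).

Record state (d : nat) := State { st_rho : R; st_M : vec d; st_E : R }.

Definition int_energy d (U : state d) : R :=
  st_E U / st_rho U - (dotv (st_M U) (st_M U) / (st_rho U ^+ 2)) / 2.

Definition admissible (b : R) d (U : state d) : Prop :=
  0 < st_rho U /\ 0 < 1 - b * st_rho U /\ 0 < int_energy U.

Definition gam (b : R) d (p : state d -> R) (U : state d) : R :=
  1 + p U * (1 - b * st_rho U) / (st_rho U * int_energy U).

Record xstate := XState { x_rho : R; x_m : R; x_E : R; x_G : R }.

Definition ext_of (b : R) d (p : state d -> R) (nv : vec d) (U : state d) : xstate :=
  let mn := dotv (st_M U) nv in
  let w : vec d := fun k => st_M U k - mn * nv k in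
  XState (st_rho U) mn (st_E U - dotv w w / (2 * st_rho U))
         (st_rho U * gam b p U).

Definition x_u (W : xstate) : R := x_m W / x_rho W.
Definition x_g (W : xstate) : R := x_G W / x_rho W.
Definition x_p (b : R) (W : xstate) : R :=
  (x_g W - 1) / (1 - b * x_rho W) * (x_E W - x_m W ^+ 2 / (2 * x_rho W)).

Definition csnd (b r pr g : R) : R := Num.sqrt (g * pr / (r * (1 - b * r))).

(* wave curve f_Z(P) (shock branch for P > p_Z, rarefaction otherwise) *)
Definition fwave (b r pr g P : R) : R :=
  if pr < P then
    (P - pr) * Num.sqrt ((2 * (1 - b * r) / ((g + 1) * r)) / (P + (g - 1) / (g + 1) * pr))
  else
    2 * csnd b r pr g * (1 - b * r) / (g - 1) * ((P / pr) `^ ((g - 1) / (2 * g)) - 1).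

(* density behind the wave connecting (r, pr) to pressure P
   (Rankine-Hugoniot for P > pr, isentrope p (tau - b)^g = const otherwise) *)
Definition rho_star (b r pr g P : R) : R :=
  (b + (r^-1 - b) *
     (if pr < P then ((g + 1) * pr + (g - 1) * P) / ((g + 1) * P + (g - 1) * pr)
      else (pr / P) `^ (g^-1)))^-1.

Definition qshock (b r pr g P : R) : R :=
  Num.sqrt ((P + (g - 1) / (g + 1) * pr) / (2 * (1 - b * r) / ((g + 1) * r))).

Definition p_isen (b r pr g rr : R) : R := pr * ((r^-1 - b) / (rr^-1 - b)) `^ g.

(* v is the density of the 1-rarefaction fan (left state (r,u,pr,g)) at xi *)
Definition fanL (b r u pr g xi v : R) : Prop :=
  let cf := csnd b v (p_isen b r pr g v) g in
  let uf := u + 2 / (g - 1) * (csnd b r pr g * (1 - b * r) - cf * (1 - b * v)) in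
  uf - cf = xi.

(* v is the density of the 3-rarefaction fan (right state (r,u,pr,g)) at xi *)
Definition fanR (b r u pr g xi v : R) : Prop :=
  let cf := csnd b v (p_isen b r pr g v) g in
  let uf := u - 2 / (g - 1) * (csnd b r pr g * (1 - b * r) - cf * (1 - b * v)) in
  uf + cf = xi.

(* value v at xi = x/t on the left of the contact (speed ustar), star pressure P *)
Definition left_wave (b r u pr g P ustar xi v : R) : Prop :=
  let rs := rho_star b r pr g P in
  if pr < P then
    let S := u - qshock b r pr g P / r in
    (xi <= S /\ v = r) \/ (S <= xi <= ustar /\ v = rs)
  else
    let hd := u - csnd b r pr g in
    let tl := ustar - csnd b rs P g in
    [\/ xi <= hd /\ v = r,
        (hd <= xi <= tl) /\ (rs <= v <= r) /\ fanL b r u pr g xi v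
      | tl <= xi <= ustar /\ v = rs].

Definition right_wave (b r u pr g P ustar xi v : R) : Prop :=
  let rs := rho_star b r pr g P in
  if pr < P then
    let S := u + qshock b r pr g P / r in
    (S <= xi /\ v = r) \/ (ustar <= xi <= S /\ v = rs)
  else
    let hd := u + csnd b r pr g in
    let tl := ustar + csnd b rs P g in
    [\/ hd <= xi /\ v = r,
        (tl <= xi <= hd) /\ (rs <= v <= r) /\ fanR b r u pr g xi v
      | ustar <= xi <= tl /\ v = rs].

Definition nondeg (b : R) (W : xstate) : Prop :=
  [/\ 0 < x_rho W, 0 < 1 - b * x_rho W, 0 < x_p b W & 1 < x_g W].

Definition escape (b : R) (W : xstate) : R :=
  2 * csnd b (x_rho W) (x_p b W) (x_g W) * (1 - b * x_rho W) / (x_g W - 1).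

Definition no_vacuum (b : R) (WL WR : xstate) : Prop :=
  x_u WR - x_u WL < escape b WL + escape b WR.

Definition star_pressure (b : R) (WL WR : xstate) (P : R) : Prop :=
  0 < P /\
  fwave b (x_rho WL) (x_p b WL) (x_g WL) P + fwave b (x_rho WR) (x_p b WR) (x_g WR) P
    + x_u WR - x_u WL = 0.

Definition ustar (b : R) (WL WR : xstate) (P : R) : R :=
  (x_u WL + x_u WR) / 2 +
  (fwave b (x_rho WR) (x_p b WR) (x_g WR) P - fwave b (x_rho WL) (x_p b WL) (x_g WL) P) / 2.

Definition dens_novac (b : R) (WL WR : xstate) (P xi v : R) : Prop :=
  left_wave b (x_rho WL) (x_u WL) (x_p b WL) (x_g WL) P (ustar b WL WR P) xi v \/
  right_wave b (x_rho WR) (x_u WR) (x_p b WR) (x_g WR) P (ustar b WL WR P) xi v.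

Definition dens_vac (b : R) (WL WR : xstate) (xi v : R) : Prop :=
  let rL := x_rho WL in let uL := x_u WL in let pL := x_p b WL in let gL := x_g WL in
  let rR := x_rho WR in let uR := x_u WR in let pR := x_p b WR in let gR := x_g WR in
  let hL := uL - csnd b rL pL gL in let aL := uL + escape b WL in
  let hR := uR + csnd b rR pR gR in let aR := uR - escape b WR in
  (xi <= hL /\ v = rL) \/
  ((hL <= xi <= aL) /\ (0 < v <= rL) /\ fanL b rL uL pL gL xi v) \/
  (aL <= xi <= aR /\ v = 0) \/
  ((aR <= xi <= hR) /\ (0 < v <= rR) /\ fanR b rR uR pR gR xi v) \/
  (hR <= xi /\ v = rR).

Definition riemann_density (b : R) (WL WR : xstate) (rho : R -> R -> R) : Prop :=
  nondeg b WL /\ nondeg b WR /\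
  ((no_vacuum b WL WR /\ exists P, star_pressure b WL WR P /\
      forall x t, 0 < t -> dens_novac b WL WR P (x / t) (rho x t))
   \/ (~ no_vacuum b WL WR /\
      forall x t, 0 < t -> dens_vac b WL WR (x / t) (rho x t))).

Definition riemann_maxspeed (b : R) (WL WR : xstate) (lam : R) : Prop :=
  let rL := x_rho WL in let uL := x_u WL in let pL := x_p b WL in let gL := x_g WL in
  let rR := x_rho WR in let uR := x_u WR in let pR := x_p b WR in let gR := x_g WR in
  nondeg b WL /\ nondeg b WR /\
  ((no_vacuum b WL WR /\ exists P, star_pressure b WL WR P /\
      let l1 := if pL < P then uL - qshock b rL pL gL P / rL else uL - csnd b rL pL gL in
      let l3 := if pR < P then uR + qshock b rR pR gR P / rR else uR + csnd b rR pR gR in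
      lam = Num.max (Num.max 0 (- l1)) (Num.max 0 l3))
   \/ (~ no_vacuum b WL WR /\
      lam = Num.max (Num.max 0 (- (uL - csnd b rL pL gL))) (Num.max 0 (uR + csnd b rR pR gR)))).

Definition nij d (c : vec d) : vec d := fun k => c k / normv c.

Definition dLow d (V : Type) (lamhat : vec d -> state d -> state d -> R)
  (c : V -> V -> vec d) (U : V -> state d) (i j : V) : R :=
  Num.max (lamhat (nij (c i j)) (U i) (U j) * normv (c i j))
          (lamhat (nij (c j i)) (U j) (U i) * normv (c j i)).

(* density of the auxiliary state bar U_ij (flux first row is m, so f(U) c = M . c) *)
Definition rhobar d (V : eqType) (lamhat : vec d -> state d -> state d -> R)
  (c : V -> V -> vec d) (U : V -> state d) (i j : V) : R :=
  if j == i then st_rho (U i) else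
  (st_rho (U i) + st_rho (U j)) / 2
  - (dotv (st_M (U j)) (c i j) - dotv (st_M (U i)) (c i j)) / (2 * dLow lamhat c U i j).

Definition rho_lim (b g r : R) : R := (g + 1) * r / ((g - 1) + 2 * b * r).
Definition tau_inf (b g r : R) : R := ((g - 1) / r + 2 * b) / (g + 1).

End Defs.

(* Main.v *)
Require Import Defs.
From HB Require Import structures.
From mathcomp Require Import all_boot all_order all_algebra.
From mathcomp Require Import reals exp.
From mathcomp Require Import boolp classical_sets topology normedtype derive realfun.
From mathcomp Require Import ring lra.
Import Order.TTheory GRing.Theory Num.Theory.
Import numFieldNormedType.Exports.
Local Open Scope ring_scope.

Section Alg.
Variable R : realType.
Implicit Types (b r pr g P u v xi us : R).

Lemma invle (x y : R) : 0 < y -> y <= x -> x^-1 <= y^-1.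
Proof. move=> y0 yx; rewrite lef_pV2 ?posrE //; exact: lt_le_trans yx. Qed.

Lemma rho_lim_ge b g r : 0 <= b -> 0 < r -> 0 < 1 - b * r -> 1 < g -> r <= rho_lim b g r.
Proof.
move=> b0 r0 br g1; rewrite /rho_lim -subr_ge0.
have D : 0 < (g - 1) + 2 * b * r by have := mulr_ge0 b0 (ltW r0); lra.
have -> : (g + 1) * r / (g - 1 + 2 * b * r) - r = 2 * r * (1 - b * r) / (g - 1 + 2 * b * r).
  by field; rewrite gt_eqF.
by apply: divr_ge0; [apply: mulr_ge0; lra|lra].
Qed.

Lemma rho_lim_ge0 b g r : 0 <= b -> 0 < r -> 0 < 1 - b * r -> 1 < g -> 0 <= rho_lim b g r.
Proof. move=> b0 r0 br g1; apply: (le_trans (ltW r0)); exact: rho_lim_ge. Qed.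

Lemma rs_le b r pr g P : 0 <= b -> 0 < r -> 0 < 1 - b * r -> 0 < pr -> 1 < g -> 0 < P ->
  rho_star b r pr g P <= rho_lim b g r.
Proof.
move=> b0 r0 br pr0 g1 P0.
have rb : 0 < r^-1 - b.
  have -> : r^-1 - b = (1 - b * r) / r by field; rewrite gt_eqF.
  by apply: divr_gt0.
rewrite /rho_star; case: ifP => H.
- set X := (_ / _).
  have Dp : 0 < (g + 1) * P + (g - 1) * pr.
    by apply: addr_gt0; apply: mulr_gt0 => //; lra.
  have kx : X - (g - 1) / (g + 1) = 4 * g * pr / ((g + 1) * ((g + 1) * P + (g - 1) * pr)).
    rewrite /X; field; rewrite !gt_eqF //; lra.
  have Xge : (g - 1) / (g + 1) <= X.
    rewrite -subr_ge0 kx; apply: divr_ge0; [apply: mulr_ge0 => //; lra|].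
    by apply: mulr_ge0; lra.
  have ti : 0 < tau_inf b g r.
    rewrite /tau_inf; apply: divr_gt0; last lra.
    by have := divr_gt0 (x := g - 1) (y := r) ltac:(lra) r0; lra.
  have -> : rho_lim b g r = (tau_inf b g r)^-1.
    have bp := mulr_ge0 b0 (ltW r0).
    have e1 : (g - 1) / r + 2 * b = ((g-1) + 2 * b * r) / r by field; rewrite gt_eqF.
    rewrite /rho_lim /tau_inf e1 invf_div; field.
    rewrite !gt_eqF //; lra.
  apply: invle => //.
  have -> : tau_inf b g r = b + (r^-1 - b) * ((g - 1) / (g + 1)).
    rewrite /tau_inf; field; rewrite !gt_eqF //; lra.
  by rewrite lerD2l ler_pM2l.
- have X1 : 1 <= (pr / P) `^ g^-1.
    rewrite -(powRr0 (pr / P)); apply: ler_powR; last by rewrite invr_ge0; lra.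
    by rewrite ler_pdivlMr // mul1r; rewrite leNgt H.
  apply: (le_trans _ (rho_lim_ge _ _ _ b0 r0 br g1)).
  rewrite -[X in _ <= X]invrK; apply: invle; first by rewrite invr_gt0.
  rewrite -lerBlDl; by rewrite -[X in X <= _]mulr1 ler_pM2l.
Qed.

Arguments rs_le {b r pr g P}.
Arguments rho_lim_ge {b g r}.
Arguments rho_lim_ge0 {b g r}.

Lemma tau_inv b g r : 0 <= b -> 0 < r -> 1 < g -> (tau_inf b g r)^-1 = rho_lim b g r.
Proof.
move=> b0 r0 g1.
have bp := mulr_ge0 b0 (ltW r0).
have e1 : (g - 1) / r + 2 * b = ((g-1) + 2 * b * r) / r by field; rewrite gt_eqF.
rewrite /rho_lim /tau_inf e1 invf_div; field.
rewrite !gt_eqF //; lra.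
Qed.

Lemma left_wave_le b r u pr g P us xi v : 0 <= b -> 0 < r -> 0 < 1 - b * r -> 0 < pr ->
  1 < g -> 0 < P -> left_wave b r u pr g P us xi v -> v <= rho_lim b g r.
Proof.
move=> b0 r0 br pr0 g1 P0.
have h1 := rs_le b0 r0 br pr0 g1 P0; have h2 := rho_lim_ge b0 r0 br g1.
rewrite /left_wave; case: ifP => _ /=.
- by case=> [[_ ->]|[_ ->]].
- case=> [[_ ->]|[_ [/andP [_ vr] _]]|[_ ->]] //; exact: le_trans vr h2.
Qed.

Lemma right_wave_le b r u pr g P us xi v : 0 <= b -> 0 < r -> 0 < 1 - b * r -> 0 < pr ->
  1 < g -> 0 < P -> right_wave b r u pr g P us xi v -> v <= rho_lim b g r.
Proof.
move=> b0 r0 br pr0 g1 P0.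
have h1 := rs_le b0 r0 br pr0 g1 P0; have h2 := rho_lim_ge b0 r0 br g1.
rewrite /right_wave; case: ifP => _ /=.
- by case=> [[_ ->]|[_ ->]].
- case=> [[_ ->]|[_ [/andP [_ vr] _]]|[_ ->]] //; exact: le_trans vr h2.
Qed.

Lemma part_i b WL WR rho : 0 <= b -> riemann_density b WL WR rho ->
  forall x t, 0 < t -> rho x t <= Num.max (rho_lim b (x_g WL) (x_rho WL)) (rho_lim b (x_g WR) (x_rho WR)).
Proof.
move=> b0 [[rL0 bL pL gL] [[rR0 bR pR gR] H]] x t t0.
have hL2 := rho_lim_ge b0 rL0 bL gL; have hR2 := rho_lim_ge b0 rR0 bR gR.
have hL0 := rho_lim_ge0 b0 rL0 bL gL; have hR0 := rho_lim_ge0 b0 rR0 bR gR.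
case: H => [[_ [P [[P0 _] H]]]|[_ H]].
- case: (H x t t0) => [/left_wave_le|/right_wave_le] h.
  + by rewrite le_max h.
  + by rewrite le_max h ?orbT.
- case: (H x t t0) => /=.
  + by case=> _ ->; rewrite le_max hL2.
  case.
  + by case=> _ [/andP [_ vr] _]; rewrite le_max (le_trans vr hL2).
  case.
  + by case=> _ ->; rewrite le_max hL0.
  case.
  + by case=> _ [/andP [_ vr] _]; rewrite le_max (le_trans vr hR2) orbT.
  + by case=> _ ->; rewrite le_max hR2 orbT.
Qed.

Lemma side b r pr g P y : 0 <= b -> 0 < r -> 0 < 1 - b * r -> 0 < pr -> 1 < g -> 0 < P ->
  (if pr < P then qshock b r pr g P / r <= y else csnd b r pr g <= y) ->
  b * r * y <= y - fwave b r pr g P.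
Proof.
move=> b0 r0 br pr0 g1 P0; rewrite /fwave /qshock; case: ifP => H hy.
- set B := (g - 1) / (g + 1) * pr.
  have B0 : 0 <= B by apply: mulr_ge0 => //; [apply: divr_ge0|]; lra.
  set A := 2 * (1 - b * r) / ((g + 1) * r).
  have A0 : 0 < A by apply: divr_gt0; [lra| apply: mulr_gt0 => //; lra].
  have PB : 0 < P + B by lra.
  set s := Num.sqrt (A / (P + B)).
  have s0 : 0 < s by rewrite sqrtr_gt0; apply: divr_gt0.
  have ss : s * s = A / (P + B) by rewrite -expr2 sqr_sqrtr // ltW // divr_gt0.
  have eq1 : Num.sqrt ((P + B) / A) = s^-1 by rewrite -invf_div sqrtrV // ltW // divr_gt0.
  rewrite eq1 in hy.
  have y1 : (1 - b * r) / (s * r) <= (1 - b * r) * y.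
    have -> : (1 - b * r) / (s * r) = (1 - b * r) * (s^-1 / r) by field; rewrite !gt_eqF.
    by apply: ler_wpM2l => //; lra.
  suff : (P - pr) * s <= (1 - b * r) / (s * r) by move=> h; have := le_trans h y1; lra.
  rewrite -subr_ge0.
  have -> : (1 - b * r) / (s * r) - (P - pr) * s = ((1 - b * r) - (P - pr) * (s * s) * r) / (s * r).
    by field; rewrite !gt_eqF.
  apply: divr_ge0; last by apply: mulr_ge0; apply: ltW.
  rewrite ss /A.
  have -> : 1 - b * r - (P - pr) * (2 * (1 - b * r) / ((g + 1) * r) / (P + B)) * r
     = (1 - b * r) * ((g + 1) * (P + B) - 2 * (P - pr)) / ((g + 1) * (P + B)).
    by field; rewrite !gt_eqF //; lra.
  have -> : (g + 1) * (P + B) - 2 * (P - pr) = (g - 1) * P + (g + 1) * pr.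
    by rewrite /B; field; rewrite gt_eqF //; lra.
  apply: divr_ge0; last by apply: mulr_ge0; lra.
  apply: mulr_ge0; first lra.
  by apply: addr_ge0; apply: mulr_ge0; lra.
- have c0 : 0 <= csnd b r pr g by apply: sqrtr_ge0.
  have y0 : 0 <= y by apply: le_trans hy.
  have a1 : (P / pr) `^ ((g - 1) / (2 * g)) <= 1.
    rewrite -[X in _ <= X](powRr0 (P / pr)); apply: ger_powR.
      by rewrite divr_gt0 //= ler_pdivrMr // mul1r leNgt H.
    by apply: divr_ge0; lra.
  have f0 : 2 * csnd b r pr g * (1 - b * r) / (g - 1) * ((P / pr) `^ ((g - 1) / (2 * g)) - 1) <= 0.
    apply: mulr_ge0_le0; last lra.
    by apply: divr_ge0; [apply: mulr_ge0; [apply: mulr_ge0|]|]; lra.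
  have : 0 <= (1 - b * r) * y by apply: mulr_ge0; lra.
  lra.
Qed.

Lemma core_ii b WL WR lam lam' : 0 <= b -> riemann_maxspeed b WL WR lam -> lam <= lam' ->
  b * (x_rho WL * (lam' + x_u WL) + x_rho WR * (lam' - x_u WR)) <= 2 * lam'.
Proof.
move=> b0; rewrite /riemann_maxspeed /=.
move=> [[rL0 bL pL gL] [[rR0 bR pR gR] H]] ll.
have cL : 0 <= csnd b (x_rho WL) (x_p b WL) (x_g WL) by apply: sqrtr_ge0.
have cR : 0 <= csnd b (x_rho WR) (x_p b WR) (x_g WR) by apply: sqrtr_ge0.
case: H => [[_ [P [[P0 Heq] Hl]]] | [Hnv Hl]].
- have m1 : Num.max 0 (- (if x_p b WL < P then x_u WL - qshock b (x_rho WL) (x_p b WL) (x_g WL) P / x_rho WL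
          else x_u WL - csnd b (x_rho WL) (x_p b WL) (x_g WL))) <= lam'.
    by apply: le_trans ll; rewrite Hl le_max lexx.
  have m3 : Num.max 0 (if x_p b WR < P then x_u WR + qshock b (x_rho WR) (x_p b WR) (x_g WR) P / x_rho WR
          else x_u WR + csnd b (x_rho WR) (x_p b WR) (x_g WR)) <= lam'.
    by apply: le_trans ll; rewrite Hl le_max lexx orbT.
  rewrite ge_max in m1; rewrite ge_max in m3.
  case/andP: m1 => _ m1; case/andP: m3 => _ m3.
  have hL := @side b (x_rho WL) (x_p b WL) (x_g WL) P (lam' + x_u WL) b0 rL0 bL pL gL P0
    ltac:(by move: m1; case: (x_p b WL < P) => /=; lra).
  have hR := @side b (x_rho WR) (x_p b WR) (x_g WR) P (lam' - x_u WR) b0 rR0 bR pR gR P0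
    ltac:(by move: m3; case: (x_p b WR < P) => /=; lra).
  lra.
- have m1 : Num.max 0 (- (x_u WL - csnd b (x_rho WL) (x_p b WL) (x_g WL))) <= lam'.
    by apply: le_trans ll; rewrite Hl le_max lexx.
  have m3 : Num.max 0 (x_u WR + csnd b (x_rho WR) (x_p b WR) (x_g WR)) <= lam'.
    by apply: le_trans ll; rewrite Hl le_max lexx orbT.
  rewrite ge_max in m1; rewrite ge_max in m3.
  case/andP: m1 => _ m1; case/andP: m3 => _ m3.
  have eL : 0 <= escape b WL.
    by rewrite /escape; apply: divr_ge0; [apply: mulr_ge0; [apply: mulr_ge0|]|]; lra.
  have eR : 0 <= escape b WR.
    by rewrite /escape; apply: divr_ge0; [apply: mulr_ge0; [apply: mulr_ge0|]|]; lra.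
  have uu : x_u WL <= x_u WR by move: Hnv; rewrite /no_vacuum; move/negP; rewrite -leNgt; lra.
  have h1 : 0 <= (1 - b * x_rho WL) * (lam' + x_u WL) by apply: mulr_ge0; lra.
  have h2 : 0 <= (1 - b * x_rho WR) * (lam' - x_u WR) by apply: mulr_ge0; lra.
  lra.
Qed.
End Alg.

Section Cont.
Variable R : realType.

Lemma powR_cont (e a : R) : 0 < a -> {for a, continuous (fun y : R => y `^ e)}.
Proof.
move=> a0; apply: differentiable_continuous; apply/derivable1_diffP.
by apply: derivable_powR; rewrite in_itv /= andbT.
Qed.

Lemma cont_fr (K pr e x : R) : 0 < pr -> 0 < x ->
  {for x, continuous (fun P => K * ((Num.min P pr / pr) `^ e - 1))}.
Proof.
move=> pr0 x0.
apply: continuousM; first exact: cst_continuous.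
apply: continuousB; last exact: cst_continuous.
apply: (@continuous_comp _ _ _ (fun P => Num.min P pr / pr) (fun y : R => y `^ e)).
- apply: continuousM; last exact: cst_continuous.
  apply: (@continuous_min _ _ id (fun=> pr)); [exact: cvg_id|exact: cst_continuous].
- by apply: powR_cont; apply: divr_gt0 => //; rewrite lt_min x0 pr0.
Qed.

Lemma cont_fs (A B pr x : R) : 0 < A -> 0 <= B -> 0 < pr ->
  {for x, continuous (fun P => (Num.max P pr - pr) * Num.sqrt (A / (Num.max P pr + B)))}.
Proof.
move=> A0 B0 pr0.
have cm : {for x, continuous (fun P => Num.max P pr)}.
  apply: (@continuous_max _ _ id (fun=> pr)); [exact: cvg_id|exact: cst_continuous].
apply: continuousM.
- by apply: continuousB => //; exact: cst_continuous.
- apply: (@continuous_comp _ _ _ (fun P => A / (Num.max P pr + B)) Num.sqrt); last exact: sqrt_continuous.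
  apply: continuousM; first exact: cst_continuous.
  apply: continuousV.
    by rewrite gt_eqF //; apply: (lt_le_trans pr0); rewrite -[X in X <= _]addr0 lerD // le_max lexx orbT.
  by apply: continuousD => //; exact: cst_continuous.
Qed.

Definition fr (b r pr g P : R) := 2 * csnd b r pr g * (1 - b * r) / (g - 1) * ((P / pr) `^ ((g - 1) / (2 * g)) - 1).
Definition fs (b r pr g P : R) := (P - pr) * Num.sqrt ((2 * (1 - b * r) / ((g + 1) * r)) / (P + (g - 1) / (g + 1) * pr)).

Lemma fw_split b r pr g P : 0 < pr ->
  fwave b r pr g P = fr b r pr g (Num.min P pr) + fs b r pr g (Num.max P pr).
Proof.
move=> pr0; rewrite /fwave; case: ifP => H.
- rewrite min_r ?ltW // max_l ?ltW // /fr divff ?gt_eqF // powR1 subrr mulr0 add0r //.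
- have HP : P <= pr by rewrite leNgt H.
  by rewrite min_l // max_r // /fs subrr mul0r addr0.
Qed.

Lemma cont_F b rL pL gL rR pR gR du x : 0 < rL -> 0 < 1 - b * rL -> 0 < pL -> 1 < gL ->
  0 < rR -> 0 < 1 - b * rR -> 0 < pR -> 1 < gR -> 0 <= b -> 0 < x ->
  {for x, continuous (fun P => fr b rL pL gL (Num.min P pL) + fs b rL pL gL (Num.max P pL)
     + (fr b rR pR gR (Num.min P pR) + fs b rR pR gR (Num.max P pR)) + du)}.
Proof.
move=> rL0 bL pL0 gL1 rR0 bR pR0 gR1 b0 x0.
have hA : forall r g : R, 0 < r -> 0 < 1 - b * r -> 1 < g -> 0 < 2 * (1 - b * r) / ((g + 1) * r).
  by move=> r g r0 br g1; apply: divr_gt0; [lra|apply: mulr_gt0 => //; lra].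
have hB : forall pr g : R, 0 < pr -> 1 < g -> 0 <= (g - 1) / (g + 1) * pr.
  by move=> pr g pr0 g1; apply: mulr_ge0; [apply: divr_ge0|]; lra.
apply: continuousD; last exact: cst_continuous.
apply: continuousD; apply: continuousD.
- exact: cont_fr.
- by apply: cont_fs; [apply: hA| apply: hB|].
- exact: cont_fr.
- by apply: cont_fs; [apply: hA| apply: hB|].
Qed.

Lemma powR_small (s e P0 pr : R) : 0 < s -> 0 < e -> 0 < pr -> 0 <= P0 -> P0 <= pr * s `^ e^-1 ->
  (P0 / pr) `^ e <= s.
Proof.
move=> s0 e0 pr0 P00 hP.
have -> : s = (s `^ e^-1) `^ e by rewrite -powRrM mulVf ?gt_eqF // powRr1 // ltW.
apply: ge0_ler_powR; first exact: ltW.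
- by rewrite nnegrE divr_ge0 // ltW.
- by rewrite nnegrE powR_ge0.
by rewrite ler_pdivrMr // mulrC.
Qed.

Lemma pow_le1 (s e : R) : 0 < s <= 1 -> 0 <= e -> s `^ e <= 1.
Proof.
move=> hs e0; rewrite -[X in _ <= X](powRr0 s); exact: ger_powR.
Qed.

Lemma fs_ge0 (b r pr g P : R) : 0 <= pr <= P -> 0 <= fs b r pr g P.
Proof. by case/andP=> _ h; apply: mulr_ge0; [lra| apply: sqrtr_ge0]. Qed.

Lemma exists_root (b rL pL gL rR pR gR du : R) : 0 < rL -> 0 < 1 - b * rL -> 0 < pL -> 1 < gL ->
  0 < rR -> 0 < 1 - b * rR -> 0 < pR -> 1 < gR -> 0 <= b ->
  du < 2 * csnd b rL pL gL * (1 - b * rL) / (gL - 1) + 2 * csnd b rR pR gR * (1 - b * rR) / (gR - 1) ->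
  exists P, 0 < P /\ fwave b rL pL gL P + fwave b rR pR gR P + du = 0.
Proof.
move=> rL0 bL pL0 gL1 rR0 bR pR0 gR1 b0 hdu.
set F := (fun P => fr b rL pL gL (Num.min P pL) + fs b rL pL gL (Num.max P pL)
     + (fr b rR pR gR (Num.min P pR) + fs b rR pR gR (Num.max P pR)) + du).
have hc : forall r pr g, 0 < r -> 0 < 1 - b * r -> 0 < pr -> 1 < g -> 0 < 2 * csnd b r pr g * (1 - b * r) / (g - 1).
  move=> r pr g r0 br pr0 g1; apply: divr_gt0; last lra.
  apply: mulr_gt0 => //; apply: mulr_gt0 => //; rewrite sqrtr_gt0.
  by apply: divr_gt0; [apply: mulr_gt0; lra| apply: mulr_gt0].
set escL := 2 * csnd b rL pL gL * (1 - b * rL) / (gL - 1) in hdu.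
set escR := 2 * csnd b rR pR gR * (1 - b * rR) / (gR - 1) in hdu.
have eL0 : 0 < escL by apply: hc.
have eR0 : 0 < escR by apply: hc.
set E := escL + escR.
have E0 : 0 < E by rewrite /E; lra.
set s := Num.min 1 ((E - du) / E).
have s0 : 0 < s by rewrite lt_min ltr01 /=; apply: divr_gt0 => //; rewrite /E; lra.
have s1 : s <= 1 by rewrite ge_min lexx.
have sE : E * s <= E - du.
  have h : s <= (E - du) / E by rewrite ge_min lexx orbT.
  have -> : E - du = E * ((E - du) / E) by field; rewrite gt_eqF.
  by apply: ler_wpM2l => //; apply: ltW.
have hei : forall g : R, 1 < g -> 0 < (g - 1) / (2 * g).
  by move=> g g1; apply: divr_gt0; lra.
set eL := (gL - 1) / (2 * gL).
set eR := (gR - 1) / (2 * gR).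
have eL0' : 0 < eL by apply: hei.
have eR0' : 0 < eR by apply: hei.
set m := Num.min pL pR.
set P0 := m * Num.min (s `^ eL^-1) (s `^ eR^-1).
have m0 : 0 < m by rewrite lt_min pL0 pR0.
have P00 : 0 < P0 by apply: mulr_gt0 => //; rewrite lt_min !powR_gt0.
have mn1 : Num.min (s `^ eL^-1) (s `^ eR^-1) <= 1.
  by rewrite ge_min pow_le1 // ?s0 ?s1 // invr_ge0 ltW.
have P0L : P0 <= pL.
  by rewrite /P0 -[X in _ <= X]mulr1; apply: ler_pM => //; [apply: ltW|apply/ltW; rewrite lt_min !powR_gt0| rewrite ge_min lexx].
have P0R : P0 <= pR.
  by rewrite /P0 -[X in _ <= X]mulr1; apply: ler_pM => //; [apply: ltW|apply/ltW; rewrite lt_min !powR_gt0| rewrite ge_min lexx orbT].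
have aL : (P0 / pL) `^ eL <= s.
  apply: powR_small => //; first exact: ltW.
  apply: ler_pM => //; [exact: ltW| apply/ltW; rewrite lt_min !powR_gt0 //| by rewrite ge_min lexx| by rewrite ge_min lexx].
have aR : (P0 / pR) `^ eR <= s.
  apply: powR_small => //; first exact: ltW.
  apply: ler_pM => //; [exact: ltW| apply/ltW; rewrite lt_min !powR_gt0 //| by rewrite ge_min lexx orbT| by rewrite ge_min lexx orbT].
have FP0 : F P0 <= 0.
  rewrite /F min_l // max_r // min_l // max_r // /fs !subrr !mul0r !addr0.
  rewrite /fr -/escL -/escR -/eL -/eR.
  have h1 : escL * (P0 / pL) `^ eL <= escL * s by apply: ler_wpM2l => //; apply: ltW.
  have h2 : escR * (P0 / pR) `^ eR <= escR * s by apply: ler_wpM2l => //; apply: ltW.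
  rewrite /E in sE; lra.
have frp : forall r pr g : R, 0 < pr -> fr b r pr g pr = 0.
  by move=> r pr g pr0; rewrite /fr divff ?gt_eqF // powR1 subrr mulr0.
set K := Num.max 0 (- du).
set AL := 2 * (1 - b * rL) / ((gL + 1) * rL).
set BL := (gL - 1) / (gL + 1) * pL.
have AL0 : 0 < AL by apply: divr_gt0; [lra|apply: mulr_gt0 => //; lra].
have BL0 : 0 <= BL by apply: mulr_ge0; [apply: divr_ge0|]; lra.
have K0 : 0 <= K by rewrite le_max lexx.
have KA : 0 <= 4 * K ^+ 2 / AL by apply: divr_ge0; [apply: mulr_ge0; [|apply: exprn_ge0]; lra|apply: ltW].
set P1 := 2 * pL + BL + pR + 4 * K ^+ 2 / AL + 1.
have P1L : pL < P1 by rewrite /P1; lra.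
have P1R : pR < P1 by rewrite /P1; lra.
have FP1 : 0 <= F P1.
  rewrite /F (min_r (ltW P1L)) (max_l (ltW P1L)) (min_r (ltW P1R)) (max_l (ltW P1R)) !frp // !add0r.
  have hR := @fs_ge0 b rR pR gR P1 ltac:(by rewrite (ltW pR0) ltW).
  suff hL : K <= fs b rL pL gL P1.
    have : - du <= K by rewrite le_max lexx orbT.
    lra.
  rewrite /fs -/AL -/BL.
  set X := P1 + BL.
  have X0 : 0 < X by rewrite /X; lra.
  have hX : X / 2 <= P1 - pL by rewrite /X /P1; lra.
  have sq := sqrtr_ge0 (AL / X).
  rewrite -ler_sqr ?nnegrE //; last by apply: mulr_ge0 => //; lra.
  rewrite exprMn sqr_sqrtr; last by apply: divr_ge0; apply: ltW.
  have h2 : (X / 2) ^+ 2 <= (P1 - pL) ^+ 2.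
    by rewrite ler_sqr ?nnegrE //; [apply: divr_ge0 => //; apply: ltW| lra].
  have h3 : (X / 2) ^+ 2 * (AL / X) <= (P1 - pL) ^+ 2 * (AL / X).
    by apply: ler_wpM2r => //; apply: divr_ge0; apply: ltW.
  apply: le_trans h3.
  have -> : (X / 2) ^+ 2 * (AL / X) = X * AL / 4 by field; rewrite gt_eqF.
  have hX2 : 4 * K ^+ 2 / AL <= X by rewrite /X /P1; lra.
  have : 4 * K ^+ 2 / AL * AL <= X * AL by apply: ler_wpM2r => //; apply: ltW.
  have -> : 4 * K ^+ 2 / AL * AL = 4 * K ^+ 2 by field; rewrite gt_eqF.
  lra.
have P01 : P0 <= P1 by lra.
have H1 : Num.min (F P0) (F P1) <= 0 <= Num.max (F P0) (F P1).
  by rewrite ge_min le_max FP0 FP1 orbT.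
have [|c cI Fc] := @IVT R F P0 P1 0 P01 _ H1.
  apply: continuous_in_subspaceT => x; rewrite inE /= in_itv /= => /andP [hx _].
  by apply: cont_F => //; lra.
move: cI; rewrite in_itv /= => /andP [c0 _].
exists c; split; first lra.
rewrite !fw_split //; move: Fc; rewrite /F; lra.
Qed.
End Cont.

Section Ext.
Variable R : realType.
Variable d : nat.
Implicit Types (b : R) (U : state R d) (nv c M : vec R d).

Lemma ext_g b (p : state R d -> R) nv U : st_rho U != 0 -> x_g (ext_of b p nv U) = gam b p U.
Proof. by move=> h; rewrite /x_g /=; field. Qed.

Lemma dotvC c M : dotv c M = dotv M c.
Proof. by apply: eq_bigr => k _; rewrite mulrC. Qed.

Lemma dotv_ge0 c : 0 <= dotv c c.
Proof. by apply: sumr_ge0 => k _; rewrite -expr2 sqr_ge0. Qed.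

Lemma dotv_gt0 c : (exists q, c q != 0) -> 0 < dotv c c.
Proof.
case=> q hq; rewrite lt_def dotv_ge0 andbT; apply/eqP => h.
have := @psumr_eq0P _ 'I_d predT (fun k => c k * c k).
move/(_ (fun k _ => ltac:(by rewrite -expr2 sqr_ge0)) h q isT) => /eqP.
by rewrite mulf_eq0 orbb (negbTE hq).
Qed.

Lemma dot_nij M c : dotv M (nij c) = dotv M c / normv c.
Proof. by rewrite /dotv /nij mulr_suml; apply: eq_bigr => k _; rewrite mulrA. Qed.

Lemma norm_nij c : (exists q, c q != 0) -> normv (nij c) = 1.
Proof.
move=> hc; have h := dotv_gt0 c hc.
have N0 : 0 < normv c by rewrite sqrtr_gt0.
rewrite /normv dot_nij dotvC dot_nij.
have -> : dotv c c / normv c / normv c = dotv c c / (normv c ^+ 2) by field; rewrite gt_eqF.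
by rewrite /normv sqr_sqrtr ?ltW // divff ?gt_eqF // sqrtr1.
Qed.

Lemma dotw M nv : dotv nv nv = 1 ->
  dotv (fun k => M k - dotv M nv * nv k) (fun k => M k - dotv M nv * nv k)
  = dotv M M - dotv M nv ^+ 2.
Proof.
move=> h1.
have e : forall a : R, dotv (fun k => M k - a * nv k) (fun k => M k - a * nv k)
  = dotv M M - 2 * a * dotv M nv + a ^+ 2 * dotv nv nv.
  move=> a; rewrite /dotv !mulr_sumr -sumrB -big_split /=.
  by apply: eq_bigr => k _; ring.
by rewrite e h1; ring.
Qed.

Lemma ext_p b (p : state R d -> R) nv U : dotv nv nv = 1 -> st_rho U != 0 ->
  1 - b * st_rho U != 0 -> int_energy U != 0 -> x_p b (ext_of b p nv U) = p U.
Proof.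
move=> h1 r0 br e0; rewrite /x_p ext_g // /= /x_m /= dotw //.
move: e0; rewrite /gam /int_energy => e0.
field; rewrite r0 br /=.
have -> : st_E U * (st_rho U * 2) - dotv (st_M U) (st_M U)
  = (2 * st_rho U ^+ 2) * (st_E U / st_rho U - dotv (st_M U) (st_M U) / st_rho U ^+ 2 / 2).
  by field.
by rewrite mulf_neq0 // mulf_neq0 // ?pnatr_eq0 // expf_neq0.
Qed.
End Ext.

Section Lam.
Variable R : realType.

Lemma lam_exists (b : R) WL WR : 0 <= b -> nondeg b WL -> nondeg b WR ->
  exists lam, riemann_maxspeed b WL WR lam.
Proof.
move=> b0 hL hR; have hL' := hL; have hR' := hR.
case: hL' => rL0 bL pL gL; case: hR' => rR0 bR pR gR.
case hv : (x_u WR - x_u WL < escape b WL + escape b WR).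
- have [P [P0 HP]] := @exists_root R b (x_rho WL) (x_p b WL) (x_g WL) (x_rho WR) (x_p b WR) (x_g WR)
     (x_u WR - x_u WL) rL0 bL pL gL rR0 bR pR gR b0 hv.
  eexists; rewrite /riemann_maxspeed /=; split => //; split => //; left; split => //.
  exists P; split; last reflexivity.
  by split => //; lra.
- eexists; rewrite /riemann_maxspeed /=; split => //; split => //; right; split; last reflexivity.
  by rewrite /no_vacuum hv.
Qed.

Lemma rho_lim_ge' (b g r : R) : 0 <= b -> 0 < r -> b * r <= 1 -> 1 < g -> r <= rho_lim b g r.
Proof.
move=> b0 r0 br g1; rewrite /rho_lim -subr_ge0.
have D : 0 < (g - 1) + 2 * b * r by have := mulr_ge0 b0 (ltW r0); lra.
have -> : (g + 1) * r / (g - 1 + 2 * b * r) - r = 2 * r * (1 - b * r) / (g - 1 + 2 * b * r).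
  by field; rewrite gt_eqF.
by apply: divr_ge0; [apply: mulr_ge0; lra|lra].
Qed.
End Lam.

Theorem lemma4p3 (R : realType) (d : nat) (b : R) (p : state R d -> R)
  (V : finType) (I : V -> {set V}) (m : V -> R) (c : V -> V -> vec R d) (tau : R)
  (lamhat : vec R d -> state R d -> state R d -> R) (U : V -> state R d) (i : V) :
  (0 < d)%N -> 0 <= b ->
  (forall W : state R d, admissible b W -> 0 <= p W) ->
  (forall k, k \in I k) ->
  (forall k, 0 < m k) ->
  (forall k l q, c k l q = - c l k q) ->
  (forall k q, \sum_(l in I k) c k l q = 0) ->
  (forall k l, l \in I k -> l != k -> exists q, c k l q != 0) ->
  0 < tau ->
  (forall nv W1 W2, 0 < lamhat nv W1 W2) ->
  (forall nv W1 W2 lam, normv nv = 1 -> admissible b W1 -> admissible b W2 ->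
     riemann_maxspeed b (ext_of b p nv W1) (ext_of b p nv W2) lam ->
     lam <= lamhat nv W1 W2) ->
  (forall k, admissible b (U k)) ->
  (forall k, 0 < p (U k)) ->
  (* (i) *)
  (forall j, j \in I i ->
     forall rho : R -> R -> R,
       riemann_density b (ext_of b p (nij (c i j)) (U i)) (ext_of b p (nij (c i j)) (U j)) rho ->
       forall x t, 0 < t ->
         rho x t <= Num.max (tau_inf b (gam b p (U i)) (st_rho (U i)))^-1
                            (tau_inf b (gam b p (U j)) (st_rho (U j)))^-1
         /\ Num.max (tau_inf b (gam b p (U i)) (st_rho (U i)))^-1
                    (tau_inf b (gam b p (U j)) (st_rho (U j)))^-1
            = Num.max (rho_lim b (gam b p (U i)) (st_rho (U i)))
                      (rho_lim b (gam b p (U j)) (st_rho (U j))))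
  /\
  (* (ii) *)
  (tau * (\sum_(j in I i | j != i) 2 * dLow lamhat c U i j / m i) <= 1 ->
   forall rhoL : R,
     m i / tau * (rhoL - st_rho (U i))
       + \sum_(j in I i) dotv (st_M (U j)) (c i j)
       - \sum_(j in I i | j != i) dLow lamhat c U i j * (st_rho (U j) - st_rho (U i)) = 0 ->
     rhoL <= rho_lim b (\big[Num.min/gam b p (U i)]_(j in I i) gam b p (U j))
                       (\big[Num.max/rhobar lamhat c U i i]_(j in I i) rhobar lamhat c U i j)).
Proof.
move=> d0 b0 pnn Iref m0 cas csum cnz tau0 lam0 lamub adm ppos.
have rho0 : forall k, 0 < st_rho (U k) by move=> k; case: (adm k).
have br0 : forall k, 0 < 1 - b * st_rho (U k) by move=> k; case: (adm k) => _ [].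
have e0 : forall k, 0 < int_energy (U k) by move=> k; case: (adm k) => _ [].
have gam1 : forall k, 1 < gam b p (U k).
  move=> k; rewrite /gam.
  have : 0 < p (U k) * (1 - b * st_rho (U k)) / (st_rho (U k) * int_energy (U k)).
    by apply: divr_gt0; apply: mulr_gt0.
  lra.
split.
- move=> j jI rho Hr x t t0.
  have := @part_i R _ _ _ _ b0 Hr x t t0.
  rewrite /= !ext_g ?gt_eqF // => h.
  by rewrite !tau_inv.
move=> cfl rhoL heq.
have Hrb : forall j, j \in I i -> j != i ->
    0 < dLow lamhat c U i j /\ b * rhobar lamhat c U i j <= 1.
  move=> j jI ji.
  have cn := cnz i j jI ji.
  set nv := nij (c i j).
  have n1 : normv nv = 1 by apply: norm_nij.
  have dn1 : dotv nv nv = 1.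
    by rewrite -[LHS](@sqr_sqrtr _ (dotv nv nv)) ?dotv_ge0 // -/(normv nv) n1 expr1n.
  have N0 : 0 < normv (c i j) by rewrite sqrtr_gt0; apply: dotv_gt0.
  have nd : forall k, nondeg b (ext_of b p nv (U k)).
    move=> k; split => /=; [exact: rho0| exact: br0| |].
    + by rewrite ext_p ?gt_eqF.
    + by rewrite ext_g ?gt_eqF.
  have [lam Hl] := @lam_exists R b _ _ b0 (nd i) (nd j).
  have lle : lam <= lamhat nv (U i) (U j) := lamub nv (U i) (U j) lam n1 (adm i) (adm j) Hl.
  set D := dLow lamhat c U i j.
  have DN : lamhat nv (U i) (U j) * normv (c i j) <= D by rewrite /D /dLow le_max lexx.
  have D0 : 0 < D by apply: lt_le_trans DN; apply: mulr_gt0.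
  split => //.
  set lam' := D / normv (c i j).
  have l0 : 0 < lam' by apply: divr_gt0.
  have ll : lam <= lam' by apply: (le_trans lle); rewrite /lam' ler_pdivlMr.
  have core := @core_ii R b _ _ _ _ b0 Hl ll.
  rewrite /x_u /= !dot_nij in core.
  have eqr : rhobar lamhat c U i j =
     (st_rho (U i) * (lam' + dotv (st_M (U i)) (c i j) / normv (c i j) / st_rho (U i))
      + st_rho (U j) * (lam' - dotv (st_M (U j)) (c i j) / normv (c i j) / st_rho (U j))) / (2 * lam').
    rewrite /rhobar (negbTE ji) -/D /lam'.
    by field; rewrite !gt_eqF.
  rewrite eqr mulrA ler_pdivrMr ?mul1r //; exact: mulr_gt0.
set rmax := \big[Num.max/_]_(j in I i) _.
set gmin := \big[Num.min/_]_(j in I i) _.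
have rb_le : forall j, j \in I i -> rhobar lamhat c U i j <= rmax.
  by move=> j jI; rewrite /rmax (bigD1 j) //= le_max lexx.
have rmax_ge : st_rho (U i) <= rmax.
  by have := rb_le i (Iref i); rewrite /rhobar eqxx.
have brmax : b * rmax <= 1.
  rewrite /rmax; apply: (big_ind (fun x => b * x <= 1)).
  + by rewrite /rhobar eqxx; have := br0 i; lra.
  + by move=> x y hx hy; rewrite /Order.max; case: ifP.
  + move=> j jI; have [->|ji] := eqVneq j i.
      by rewrite /rhobar eqxx; have := br0 i; lra.
    by case: (Hrb j jI ji).
have gmin1 : 1 < gmin.
  rewrite /gmin; apply: (big_ind (fun x => 1 < x)) => //.
  move=> x y hx hy; by rewrite /Order.min; case: ifP.
have rmax0 : 0 < rmax by apply: lt_le_trans (rho0 i) rmax_ge.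
apply: (le_trans _ (@rho_lim_ge' R b gmin rmax b0 rmax0 brmax gmin1)).
have sum0 : \sum_(j in I i) dotv (st_M (U i)) (c i j) = 0.
  rewrite /dotv exchange_big /=; apply: big1 => k _.
  by rewrite -mulr_sumr csum mulr0.
have hsum : \sum_(j in I i) dotv (st_M (U j)) (c i j)
   = \sum_(j in I i | j != i) (dotv (st_M (U j)) (c i j) - dotv (st_M (U i)) (c i j)).
  have -> : \sum_(j in I i) dotv (st_M (U j)) (c i j)
     = \sum_(j in I i) (dotv (st_M (U j)) (c i j) - dotv (st_M (U i)) (c i j)).
    by rewrite sumrB sum0 subr0.
  by rewrite (bigD1 i (Iref i)) /= subrr add0r.
set S := \sum_(j in I i | j != i) 2 * dLow lamhat c U i j * (rhobar lamhat c U i j - st_rho (U i)).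
have hS : \sum_(j in I i | j != i) (dotv (st_M (U j)) (c i j) - dotv (st_M (U i)) (c i j))
   - \sum_(j in I i | j != i) dLow lamhat c U i j * (st_rho (U j) - st_rho (U i)) = - S.
  rewrite -sumrB /S -sumrN; apply: eq_bigr => j /andP [jI ji].
  have [D0 _] := Hrb j jI ji.
  by rewrite /rhobar (negbTE ji); field; rewrite gt_eqF.
rewrite hsum in heq.
have heq' : m i / tau * (rhoL - st_rho (U i)) = S by lra.
set T := \sum_(j in I i | j != i) 2 * dLow lamhat c U i j.
have ST : S <= (rmax - st_rho (U i)) * T.
  rewrite /S /T mulr_sumr; apply: ler_sum => j /andP [jI ji].
  have [D0 _] := Hrb j jI ji.
  rewrite mulrC; apply: ler_wpM2r; first by apply: mulr_ge0 => //; apply: ltW.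
  by have := rb_le j jI; lra.
have cfl' : tau * T / m i <= 1.
  by move: cfl; rewrite /T -mulr_suml mulrA.
have mi0 := m0 i.
have e1 : rhoL - st_rho (U i) = S * (tau / m i).
  by rewrite -heq'; field; rewrite !gt_eqF.
have tm : 0 <= tau / m i by apply: divr_ge0; apply: ltW.
have h1 : S * (tau / m i) <= (rmax - st_rho (U i)) * T * (tau / m i) by apply: ler_wpM2r.
have h2 : (rmax - st_rho (U i)) * T * (tau / m i) <= (rmax - st_rho (U i)).
  rewrite -mulrA -[X in _ <= X]mulr1; apply: ler_wpM2l; first lra.
  have -> : T * (tau / m i) = tau * T / m i by ring.
  exact: cfl'.
lra.
Qed.
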